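(* Let $p,p'\in\mathbb{N}$ and let $Q,Q'$ be λ-terms. If $\lambda y.Q\in\mathcal{E}_p$ and $BT(Q)\le^\eta_{p'}BT(Q')$, then $\lambda y.Q'\in\mathcal{E}_{p+p'}$.
   Context: $\mathtt{I}=\lambda x.x$; $\mathcal{E}$ is the set of λ-terms $Q$ with $Q\twoheadrightarrow_{\beta\eta}\mathtt{I}$. Size on β-normal forms: $|Q|=0$ if $Q\twoheadrightarrow_\beta\mathtt{I}$, and $|Q|=\max\{m,\max_{i\le m}|\lambda z_i.Q_i|+1\}$ if $Q\twoheadrightarrow_\beta\lambda yz_1\dots z_m.yQ_1\cdots Q_m$; $\mathcal{E}_p=\{Q\in\mathcal{E}:|Q|<p\}$. Böhm-like trees: coinductively generated by $U::=\bot\mid\lambda x_1\dots x_n.yU_1\cdots U_k$. The relation $\le^\eta_p$ is the greatest relation on Böhm-like trees such that $U\le^\eta_pV$ implies either $U=V=\bot$, or $U=\lambda\vec x.yU_1\cdots U_k$ and $V=\lambda\vec xz_1\dots z_m.yV_1\cdots V_kQ_1\cdots Q_m$ with $m\le p$, the $z_\ell$ not free in $yU_1\cdots U_kV_1\cdots V_k$, each $Q_i$ the Böhm tree of a term $Q'_i$ with $\lambda z_i.Q'_i\in\mathcal{E}_p$, and $U_j\le^\eta_pV_j$ for all $j\le k$. *)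

(* Defs.v *)
From mathcomp Require Import ssreflect ssrfun ssrbool eqtype ssrnat seq.
Set Implicit Arguments. Unset Strict Implicit. Unset Printing Implicit Defensive.

Inductive term : Type :=
| Var (n : nat)
| App (M N : term)
| Lam (M : term).

Definition upren (f : nat -> nat) (n : nat) : nat :=
  if n is n'.+1 then (f n').+1 else 0.

Fixpoint rename (f : nat -> nat) (M : term) : term :=
  match M with
  | Var n => Var (f n)
  | App M1 M2 => App (rename f M1) (rename f M2)
  | Lam M1 => Lam (rename (upren f) M1)
  end.

Definition upsub (s : nat -> term) (n : nat) : term :=
  if n is n'.+1 then rename S (s n') else Var 0.

Fixpoint inst (s : nat -> term) (M : term) : term :=
  match M with
  | Var n => s n
  | App M1 M2 => App (inst s M1) (inst s M2)
  | Lam M1 => Lam (inst (upsub s) M1)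
  end.

Definition subst0 (N : term) (n : nat) : term :=
  if n is n'.+1 then Var n' else N.

Inductive beta : term -> term -> Prop :=
| beta_redex M N : beta (App (Lam M) N) (inst (subst0 N) M)
| beta_appl M M' N : beta M M' -> beta (App M N) (App M' N)
| beta_appr M N N' : beta N N' -> beta (App M N) (App M N')
| beta_lam M M' : beta M M' -> beta (Lam M) (Lam M').

(* one-step beta-eta reduction; eta: \x. M x -> M  when x not free in M *)
Inductive betaeta : term -> term -> Prop :=
| be_beta M N : betaeta (App (Lam M) N) (inst (subst0 N) M)
| be_eta M : betaeta (Lam (App (rename S M) (Var 0))) M
| be_appl M M' N : betaeta M M' -> betaeta (App M N) (App M' N)
| be_appr M N N' : betaeta N N' -> betaeta (App M N) (App M N')
| be_lam M M' : betaeta M M' -> betaeta (Lam M) (Lam M').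

Inductive star (R : term -> term -> Prop) : term -> term -> Prop :=
| star_refl M : star R M M
| star_step M N P : R M N -> star R N P -> star R M P.

Definition betas := star beta.
Definition betaetas := star betaeta.

Definition lams (n : nat) (M : term) : term := iter n Lam M.
Definition apps (h : term) (Ms : seq term) : term := foldl App h Ms.

Definition Iterm : term := Lam (Var 0).

Definition inE (Q : term) : Prop := betaetas Q Iterm.

(* [bindvar k M] is the de Bruijn rendering of  \z. M  where z is the
   (free) variable with index k in M; the result lives in the same context. *)
Definition bindvar (k : nat) (M : term) : term :=
  Lam (rename (fun j => if j == k then 0 else j.+1) M).

(* size |Q| (as a relation):
   |Q| = 0 if Q ->>_beta I;
   |Q| = max{m, max_i |\z_i.Q_i| + 1} if Q ->>_beta \y z_1..z_m. y Q_1 .. Q_m.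
   Under the m+1 binders, y has index m and z_(i+1) has index m-(i+1). *)
Inductive esize : term -> nat -> Prop :=
| esize_I Q : betas Q Iterm -> esize Q 0
| esize_hnf Q m (Qs : seq term) (ss : seq nat) :
    betas Q (lams m.+1 (apps (Var m) Qs)) ->
    size Qs = m -> size ss = m ->
    (forall i, i < m -> esize (bindvar (m - i.+1) (nth (Var 0) Qs i)) (nth 0 ss i)) ->
    esize Q (maxn m (foldr maxn 0 (map S ss))).

Definition inEp (p : nat) (Q : term) : Prop :=
  inE Q /\ exists s, esize Q s /\ s < p.

(* Node n y Us  represents  \x_1..x_n. y U_1 .. U_k  (y a de Bruijn index) *)
CoInductive blt : Type :=
| Bot
| Node (n y : nat) (args : seq blt).

Definition has_hnf (M : term) : Prop :=
  exists n y Ms, betas M (lams n (apps (Var y) Ms)).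

(* graph of the Boehm tree function, as a greatest relation *)
Definition bt_sim (R : term -> blt -> Prop) : Prop :=
  forall M U, R M U ->
    (U = Bot /\ ~ has_hnf M) \/
    exists n y (Ms : seq term) (Us : seq blt),
      [/\ betas M (lams n (apps (Var y) Ms)), U = Node n y Us,
          size Us = size Ms &
          forall j, j < size Ms -> R (nth (Var 0) Ms j) (nth Bot Us j)].

Definition IsBT (M : term) (U : blt) : Prop :=
  exists R, bt_sim R /\ R M U.

Definition lift_sim (k : nat) (R : nat -> blt -> blt -> Prop) : Prop :=
  forall c U V, R c U V ->
    (U = Bot /\ V = Bot) \/
    exists n y (Us Vs : seq blt),
      [/\ U = Node n y Us,
          V = Node n (if y < c + n then y else y + k) Vs,
          size Vs = size Us &
          forall j, j < size Us -> R (c + n) (nth Bot Us j) (nth Bot Vs j)].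

Definition tree_lift (k c : nat) (U V : blt) : Prop :=
  exists R, lift_sim k R /\ R c U V.

(* V = \x_1..x_n z_1..z_m. y V_1..V_k Q_1..Q_m : the z's are the m innermost
   binders, so y becomes y+m; "z not free in V_j" means V_j is the lift by m
   of a tree W_j (living in the context of U), and U_j <= W_j. *)
Definition le_sim (p : nat) (R : blt -> blt -> Prop) : Prop :=
  forall U V, R U V ->
    (U = Bot /\ V = Bot) \/
    exists n y k m (Us Vs Qs : seq blt),
      [/\ m <= p, U = Node n y Us /\ V = Node (n + m) (y + m) (Vs ++ Qs),
          [/\ size Us = k, size Vs = k & size Qs = m],
          (forall i, i < m -> exists Q' : term,
               IsBT Q' (nth Bot Qs i) /\ inEp p (bindvar (m - i.+1) Q')) &
          (forall j, j < k -> exists W : blt,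
               tree_lift m 0 W (nth Bot Vs j) /\ R (nth Bot Us j) W)].

Definition le_eta (p : nat) (U V : blt) : Prop :=
  exists R, le_sim p R /\ R U V.

(* Main.v *)
Require Import Defs.
From mathcomp Require Import ssreflect ssrfun ssrbool eqtype ssrnat seq zify.
Set Implicit Arguments. Unset Strict Implicit.

Lemma upren_ext f g : (forall n, f n = g n) -> forall n, upren f n = upren g n.
Proof. by move=> H [|n] //=; rewrite H. Qed.

Lemma rename_ext M : forall f g, (forall n, f n = g n) -> rename f M = rename g M.
Proof.
elim: M => [n|M1 IH1 M2 IH2|M1 IH] f g H /=.
- by rewrite H.
- by rewrite (IH1 f g H) (IH2 f g H).
- by rewrite (IH _ _ (upren_ext H)).
Qed.

Lemma upsub_ext s t : (forall n, s n = t n) -> forall n, upsub s n = upsub t n.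
Proof. by move=> H [|n] //=; rewrite H. Qed.

Lemma inst_ext M : forall s t, (forall n, s n = t n) -> inst s M = inst t M.
Proof.
elim: M => [n|M1 IH1 M2 IH2|M1 IH] s t H /=.
- by rewrite H.
- by rewrite (IH1 s t H) (IH2 s t H).
- by rewrite (IH _ _ (upsub_ext H)).
Qed.

Lemma rename_id M : forall f, (forall n, f n = n) -> rename f M = M.
Proof.
elim: M => [n|M1 IH1 M2 IH2|M1 IH] f H /=.
- by rewrite H.
- by rewrite IH1 // IH2.
- by rewrite IH // => -[|n] //=; rewrite H.
Qed.

Lemma inst_id M : forall s, (forall n, s n = Var n) -> inst s M = M.
Proof.
elim: M => [n|M1 IH1 M2 IH2|M1 IH] s H /=.
- by rewrite H.
- by rewrite IH1 // IH2.
- by rewrite IH // => -[|n] //=; rewrite H.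
Qed.

Lemma rename_rename M : forall f g, rename f (rename g M) = rename (fun n => f (g n)) M.
Proof.
elim: M => [n|M1 IH1 M2 IH2|M1 IH] f g /=.
- by [].
- by rewrite IH1 IH2.
- by rewrite IH; congr Lam; apply: rename_ext => -[|n].
Qed.

Lemma inst_rename M : forall s f, inst s (rename f M) = inst (fun n => s (f n)) M.
Proof.
elim: M => [n|M1 IH1 M2 IH2|M1 IH] s f /=.
- by [].
- by rewrite IH1 IH2.
- by rewrite IH; congr Lam; apply: inst_ext => -[|n].
Qed.

Lemma rename_inst M : forall f s, rename f (inst s M) = inst (fun n => rename f (s n)) M.
Proof.
elim: M => [n|M1 IH1 M2 IH2|M1 IH] f s /=.
- by [].
- by rewrite IH1 IH2.
- rewrite IH; congr Lam; apply: inst_ext => -[|n] //=.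
  by rewrite !rename_rename.
Qed.

Lemma inst_inst M : forall s t, inst s (inst t M) = inst (fun n => inst s (t n)) M.
Proof.
elim: M => [n|M1 IH1 M2 IH2|M1 IH] s t /=.
- by [].
- by rewrite IH1 IH2.
- rewrite IH; congr Lam; apply: inst_ext => -[|n] //=.
  by rewrite inst_rename rename_inst.
Qed.

Lemma inst_subst0 s N M :
  inst s (inst (subst0 N) M) = inst (subst0 (inst s N)) (inst (upsub s) M).
Proof.
rewrite !inst_inst; apply: inst_ext => -[|n] //=.
by rewrite inst_rename inst_id.
Qed.

Lemma rename_subst0 f N M :
  rename f (inst (subst0 N) M) = inst (subst0 (rename f N)) (rename (upren f) M).
Proof.
rewrite rename_inst inst_rename; apply: inst_ext => -[|n] //=.
Qed.

Lemma star1 R M N : R M N -> star R M N.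
Proof. by move=> H; apply: star_step H (star_refl _ _). Qed.

Lemma star_trans R M N P : star R M N -> star R N P -> star R M P.
Proof. by elim=> // A B C H _ IH /IH; apply: star_step. Qed.

Lemma star_map R R' (F : term -> term) :
  (forall x y, R x y -> R' (F x) (F y)) ->
  forall M N, star R M N -> star R' (F M) (F N).
Proof.
move=> HF M N; elim=> [A|A B C H _ IH]; first exact: star_refl.
exact: star_step (HF _ _ H) IH.
Qed.

Lemma star_sub (R R' : term -> term -> Prop) :
  (forall x y, R x y -> star R' x y) -> forall M N, star R M N -> star R' M N.
Proof.
move=> HF M N; elim=> [A|A B C H _ IH]; first exact: star_refl.
exact: star_trans (HF _ _ H) IH.
Qed.

Inductive par : term -> term -> Prop :=
| par_var n : par (Var n) (Var n)
| par_app M M' N N' : par M M' -> par N N' -> par (App M N) (App M' N')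
| par_lam M M' : par M M' -> par (Lam M) (Lam M')
| par_beta M M' N N' : par M M' -> par N N' ->
    par (App (Lam M) N) (inst (subst0 N') M').

Lemma par_refl M : par M M.
Proof. elim: M => *; by constructor. Qed.

Lemma beta_par M N : beta M N -> par M N.
Proof.
elim=> *; try (constructor; by [|apply: par_refl]).
Qed.

Lemma betas_appl M M' N : betas M M' -> betas (App M N) (App M' N).
Proof. apply: (star_map (F := fun x => App x N)) => *; exact: beta_appl. Qed.
Lemma betas_appr M N N' : betas N N' -> betas (App M N) (App M N').
Proof. apply: (star_map (F := fun x => App M x)) => *; exact: beta_appr. Qed.
Lemma betas_lam M M' : betas M M' -> betas (Lam M) (Lam M').
Proof. apply: (star_map (F := Lam)) => *; exact: beta_lam. Qed.
Lemma betas_app M M' N N' : betas M M' -> betas N N' -> betas (App M N) (App M' N').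
Proof. move=> H1 H2; apply: star_trans (betas_appl _ H1) (betas_appr _ H2). Qed.

Lemma par_betas M N : par M N -> betas M N.
Proof.
elim=> {M N}.
- move=> n; exact: star_refl.
- move=> *; exact: betas_app.
- move=> *; exact: betas_lam.
- move=> M M' N N' _ H1 _ H2.
  apply: star_trans (betas_app (betas_lam H1) H2) (star1 (beta_redex _ _)).
Qed.

Lemma par_rename M N : par M N -> forall f, par (rename f M) (rename f N).
Proof.
elim=> {M N} /=.
- by move=> *; constructor.
- by move=> *; constructor; auto.
- by move=> *; constructor; auto.
- move=> M M' N N' _ H1 _ H2 f /=; rewrite rename_subst0.
  exact: par_beta.
Qed.

Lemma par_inst M N : par M N -> forall s t, (forall n, par (s n) (t n)) ->
  par (inst s M) (inst t N).
Proof.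
have Hup : forall s t, (forall n, par (s n) (t n)) -> forall n, par (upsub s n) (upsub t n).
  by move=> s t H [|n] /=; [apply: par_var | apply: par_rename].
elim=> {M N} /=.
- by [].
- by move=> *; constructor; auto.
- by move=> *; constructor; auto.
- move=> M M' N N' _ H1 _ H2 s t H; rewrite inst_subst0.
  exact: par_beta (H1 _ _ (Hup _ _ H)) (H2 _ _ H).
Qed.

Fixpoint rho (M : term) : term :=
  match M with
  | Var n => Var n
  | Lam M1 => Lam (rho M1)
  | App M1 N => match M1 with
                | Lam B => inst (subst0 (rho N)) (rho B)
                | _ => App (rho M1) (rho N)
                end
  end.

Lemma par_rho M N : par M N -> par N (rho M).
Proof.
elim=> {M N} /=.
- by move=> n; constructor.
- move=> M M' N N' H1 IH1 _ IH2; case: M H1 IH1 => [n|A B|B] H1 IH1 /=.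
  + by constructor.
  + by constructor.
  + inversion H1; subst. inversion IH1; subst. by apply: par_beta.
- by move=> *; constructor.
- move=> M M' N N' _ H1 _ H2; apply: par_inst => // -[|n] //=; exact: par_var.
Qed.

Lemma strip M N1 N2 : par M N1 -> star par M N2 ->
  exists P, star par N1 P /\ par N2 P.
Proof.
move=> H1 H2; elim: H2 N1 H1 => [A|A B C HAB _ IH] N1 H1.
- by exists N1; split; [apply: star_refl|].
- have [P [HP1 HP2]] := IH _ (par_rho HAB).
  exists P; split=> //.
  exact: star_step (par_rho H1) HP1.
Qed.

Lemma star_par_confl M N1 N2 : star par M N1 -> star par M N2 ->
  exists P, star par N1 P /\ star par N2 P.
Proof.
move=> H; elim: H N2 => [A|A B C HAB _ IH] N2 H2.
- by exists N2; split; [|apply: star_refl].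
- have [P [HP1 HP2]] := strip HAB H2.
  have [Q [HQ1 HQ2]] := IH _ HP1.
  exists Q; split=> //; exact: star_step HP2 HQ2.
Qed.

Lemma confluence M N1 N2 : betas M N1 -> betas M N2 ->
  exists P, betas N1 P /\ betas N2 P.
Proof.
have h1 : forall x y, betas x y -> star par x y.
  by apply: star_sub => x y /beta_par; apply: star1.
have h2 : forall x y, star par x y -> betas x y.
  by apply: star_sub => x y /par_betas.
move=> /h1 H1 /h1 H2; have [P [HP1 HP2]] := star_par_confl H1 H2.
by exists P; split; apply: h2.
Qed.

Lemma apps_cons h M Ms : apps h (M :: Ms) = apps (App h M) Ms.
Proof. by []. Qed.

Lemma apps_rcons h Ms M : apps h (rcons Ms M) = App (apps h Ms) M.
Proof. by rewrite /apps foldl_rcons. Qed.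

Lemma rename_apps f Ms : forall h, rename f (apps h Ms) = apps (rename f h) (map (rename f) Ms).
Proof. by elim: Ms => [|M Ms IH] h //=; rewrite !apps_cons IH. Qed.

Lemma lamsS n M : lams n.+1 M = Lam (lams n M).
Proof. by []. Qed.

Lemma rename_lams n : forall f M, rename f (lams n M) = lams n (rename (iter n upren f) M).
Proof.
elim: n => [|n IH] f M; first by [].
change (Lam (rename (upren f) (lams n M)) = Lam (lams n (rename (iter n.+1 upren f) M))).
by rewrite IH iterSr.
Qed.

Lemma iter_upren n : forall f j, iter n upren f j = if j < n then j else n + f (j - n).
Proof.
elim: n => [|n IH] f j; first by rewrite subn0.
rewrite iterS; case: j => [|j] //=.
rewrite IH ltnS subSS addSn.
by case: (j < n).
Qed.

Lemma beta_rename M N : beta M N -> forall f, beta (rename f M) (rename f N).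
Proof.
elim=> {M N} /=.
- move=> M N f; rewrite rename_subst0; exact: beta_redex.
- by move=> *; apply: beta_appl; auto.
- by move=> *; apply: beta_appr; auto.
- by move=> *; apply: beta_lam; auto.
Qed.

Lemma betas_rename f M N : betas M N -> betas (rename f M) (rename f N).
Proof. apply: star_map => x y H; exact: beta_rename. Qed.

Lemma beta_antiren X N : beta X N -> forall f M, X = rename f M ->
  exists M', beta M M' /\ N = rename f M'.
Proof.
elim=> {X N}.
- move=> M0 N0 f [n|M1 M2|B] //= [].
  case: M1 => // B /= [-> ->].
  exists (inst (subst0 M2) B); split; first exact: beta_redex.
  by rewrite rename_subst0.
- move=> M0 M0' N0 _ IH f [n|M1 M2|B] //= [E1 E2].
  have [M1' [H1 H2]] := IH _ _ E1.
  by exists (App M1' M2); split; [apply: beta_appl | rewrite /= H2 E2].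
- move=> M0 N0 N0' _ IH f [n|M1 M2|B] //= [E1 E2].
  have [M2' [H1 H2]] := IH _ _ E2.
  by exists (App M1 M2'); split; [apply: beta_appr | rewrite /= H2 E1].
- move=> M0 M0' _ IH f [n|M1 M2|B] //= [E1].
  have [B' [H1 H2]] := IH _ _ E1.
  by exists (Lam B'); split; [apply: beta_lam | rewrite /= H2].
Qed.

Lemma betas_antiren f M N : betas (rename f M) N ->
  exists M', betas M M' /\ N = rename f M'.
Proof.
move E : (rename f M) => X H; elim: H M E => [A|A B C HAB _ IH] M E.
- by exists M; split; [apply: star_refl|].
- have [M1 [H1 H2]] := beta_antiren HAB (esym E).
  have [M2 [H3 H4]] := IH _ (esym H2).
  by exists M2; split=> //; apply: star_step H1 H3.
Qed.

Lemma apps_antiren f y Qs : forall A1, rename f A1 = apps (Var y) Qs ->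
  exists v Qs0, [/\ A1 = apps (Var v) Qs0, f v = y & Qs = map (rename f) Qs0].
Proof.
elim/last_ind: Qs => [|Qs Q IH] A1.
- by case: A1 => // v [<-]; exists v, [::].
- rewrite apps_rcons; case: A1 => // A2 Q0 /= [E1 E2].
  have [v [Qs0 [-> Hv ->]]] := IH _ E1.
  exists v, (rcons Qs0 Q0); split=> //; first by rewrite apps_rcons.
  by rewrite map_rcons E2.
Qed.

Lemma lams_antiren m : forall f A1 y Qs, rename f A1 = lams m (apps (Var y) Qs) ->
  exists v Qs0, [/\ A1 = lams m (apps (Var v) Qs0), iter m upren f v = y &
                    Qs = map (rename (iter m upren f)) Qs0].
Proof.
elim: m => [|m IH] f A1 y Qs.
- exact: apps_antiren.
- rewrite lamsS; case: A1 => // A2 /= [E].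
  have [v [Qs0 [-> Hv ->]]] := IH _ _ _ _ E.
  have E2 : upren (iter m upren f) = iter m upren (upren f) by rewrite -iterS iterSr.
  by exists v, Qs0; rewrite /= E2.
Qed.

Lemma apps_not_lam y Ms B : apps (Var y) Ms <> Lam B.
Proof. by case/lastP: Ms => [|Ms M] //; rewrite apps_rcons. Qed.

Lemma apps_inj y y' Ms : forall Ms', apps (Var y) Ms = apps (Var y') Ms' -> y = y' /\ Ms = Ms'.
Proof.
elim/last_ind: Ms => [|Ms M IH] Ms'; case/lastP: Ms' => [|Ms' M']; rewrite ?apps_rcons //=.
- by case=> ->.
- by case=> /IH [-> ->] ->.
Qed.

Lemma hnf_inj n : forall n' y y' Ms Ms',
  lams n (apps (Var y) Ms) = lams n' (apps (Var y') Ms') -> [/\ n = n', y = y' & Ms = Ms'].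
Proof.
elim: n => [|n IH] [|n'] y y' Ms Ms'.
- by case/apps_inj => -> ->.
- by move/apps_not_lam.
- by move/esym/apps_not_lam.
- by case=> /IH [-> -> ->].
Qed.

Definition pw (R : term -> term -> Prop) (l1 l2 : seq term) :=
  size l1 = size l2 /\ forall i, i < size l1 -> R (nth (Var 0) l1 i) (nth (Var 0) l2 i).

Lemma pw_rcons R l1 l2 M1 M2 : pw R l1 l2 -> R M1 M2 -> pw R (rcons l1 M1) (rcons l2 M2).
Proof.
move=> [Hs H] HM; split; first by rewrite !size_rcons Hs.
move=> i; rewrite size_rcons ltnS leq_eqVlt => Hi.
rewrite !nth_rcons -Hs; case: ltnP => Hi2; first exact: H.
by case/orP: Hi => [/eqP ->|]; [rewrite eqxx | rewrite ltnNge Hi2].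
Qed.

Lemma pw_betas_refl l : pw betas l l.
Proof. by split=> // i _; apply: star_refl. Qed.

Lemma pw_betas_trans a b c : pw betas a b -> pw betas b c -> pw betas a c.
Proof.
move=> [H1 H2] [H3 H4]; split; first by rewrite H1.
move=> i Hi; apply: star_trans (H2 _ Hi) (H4 _ _); by rewrite -H1.
Qed.

Lemma apps_beta y Ms : forall P, beta (apps (Var y) Ms) P ->
  exists Ms', P = apps (Var y) Ms' /\ pw betas Ms Ms'.
Proof.
elim/last_ind: Ms => [|Ms M IH] P.
- by move=> H; inversion H.
- rewrite apps_rcons => H; inversion H; subst.
  + by case: (apps_not_lam (esym H1)).
  + have [Ms' [-> HP]] := IH _ H3.
    exists (rcons Ms' M); rewrite apps_rcons; split=> //.
    by apply: pw_rcons => //; apply: star_refl.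
  + exists (rcons Ms N'); rewrite apps_rcons; split=> //.
    by apply: pw_rcons; [apply: pw_betas_refl | apply: star1].
Qed.

Lemma hnf_beta n y Ms : forall P, beta (lams n (apps (Var y) Ms)) P ->
  exists Ms', P = lams n (apps (Var y) Ms') /\ pw betas Ms Ms'.
Proof.
elim: n => [|n IH] P; first exact: apps_beta.
rewrite lamsS => H; inversion H; subst.
have [Ms' [-> HP]] := IH _ H1.
by exists Ms'.
Qed.

Lemma hnf_betas n y Ms P : betas (lams n (apps (Var y) Ms)) P ->
  exists Ms', P = lams n (apps (Var y) Ms') /\ pw betas Ms Ms'.
Proof.
move E : (lams n _) => X H; elim: H Ms E => [A|A B C HAB _ IH] Ms E.
- by exists Ms; split; [rewrite E | apply: pw_betas_refl].
- subst A; have [Ms1 [E1 H1]] := hnf_beta HAB.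
  have [Ms2 [E2 H2]] := IH _ (esym E1).
  exists Ms2; split=> //; exact: pw_betas_trans H1 H2.
Qed.

Definition joinable M N := exists P, betas M P /\ betas N P.

Lemma hnf_join M n y Ms n' y' Ms' :
  betas M (lams n (apps (Var y) Ms)) -> betas M (lams n' (apps (Var y') Ms')) ->
  [/\ n = n', y = y', size Ms = size Ms' &
      forall i, i < size Ms -> joinable (nth (Var 0) Ms i) (nth (Var 0) Ms' i)].
Proof.
move=> H1 H2; have [P [HP1 HP2]] := confluence H1 H2.
have [L1 [E1 [S1 P1]]] := hnf_betas HP1.
have [L2 [E2 [S2 P2]]] := hnf_betas HP2.
rewrite E1 in E2; have [-> -> EL] := hnf_inj E2; subst L2.
split=> //; first by rewrite S1 S2.
move=> i Hi; exists (nth (Var 0) L1 i); split; first exact: P1.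
by apply: P2; rewrite S2 -S1.
Qed.

Lemma joinable_hnf M M0 : joinable M M0 -> has_hnf M -> has_hnf M0.
Proof.
move=> [P [HP1 HP2]] [n [y [Ms HM]]].
have [T [HT1 HT2]] := confluence HM HP1.
have [Ms' [ET _]] := hnf_betas HT1.
exists n, y, Ms'; rewrite -ET; exact: star_trans HP2 HT2.
Qed.

Lemma isbt_join R M M0 U : bt_sim R -> R M0 U -> joinable M M0 -> IsBT M U.
Proof.
move=> HR H0 HJ.
exists (fun M U => exists M0, joinable M M0 /\ R M0 U); split; last by exists M0.
move=> {M M0 U H0 HJ} M U [M0 [[P [HP1 HP2]] H0]].
case: (HR _ _ H0) => [[-> Hn]|[n [y [Ms [Us [Hb -> HS HU]]]]]].
- left; split=> // Hh; apply: Hn; apply: joinable_hnf Hh; by exists P.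
- right.
  have [T [HT1 HT2]] := confluence Hb HP2.
  have [Ms' [ET [S1 P1]]] := hnf_betas HT1.
  exists n, y, Ms', Us; split=> //.
  + rewrite -ET; exact: star_trans HP1 HT2.
  + by rewrite HS.
  + move=> j Hj; exists (nth (Var 0) Ms j); split; last by apply: HU; rewrite S1.
    exists (nth (Var 0) Ms' j); split; first exact: star_refl.
    by apply: P1; rewrite S1.
Qed.

Lemma beta_be M N : beta M N -> betaeta M N.
Proof. elim=> *; [apply: be_beta|apply: be_appl|apply: be_appr|apply: be_lam]; done. Qed.

Lemma betas_be M N : betas M N -> betaetas M N.
Proof. apply: star_sub => x y /beta_be; exact: star1. Qed.

Lemma betaetas_lam M M' : betaetas M M' -> betaetas (Lam M) (Lam M').
Proof. apply: (star_map (F := Lam)) => *; exact: be_lam. Qed.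
Lemma betaetas_app M M' N N' : betaetas M M' -> betaetas N N' -> betaetas (App M N) (App M' N').
Proof.
move=> H1 H2; apply: star_trans.
- apply: (star_map (F := fun x => App x N)) H1 => *; exact: be_appl.
- apply: (star_map (F := fun x => App M' x)) H2 => *; exact: be_appr.
Qed.
Lemma betaetas_lams n M M' : betaetas M M' -> betaetas (lams n M) (lams n M').
Proof. elim: n => [|n IH] // H; exact: betaetas_lam (IH H). Qed.

Lemma betaetas_apps Ms : forall h h' Ms', betaetas h h' -> size Ms = size Ms' ->
  (forall i, i < size Ms -> betaetas (nth (Var 0) Ms i) (nth (Var 0) Ms' i)) ->
  betaetas (apps h Ms) (apps h' Ms').
Proof.
elim: Ms => [|M Ms IH] h h' [|M' Ms'] //= Hh [HS] H.
apply: IH => //.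
- by apply: betaetas_app => //; exact: (H 0).
- by move=> i Hi; exact: (H i.+1).
Qed.

Fixpoint vl (m : nat) : seq term :=
  if m is m'.+1 then rcons (map (rename S) (vl m')) (Var 0) else [::].

Lemma size_vl m : size (vl m) = m.
Proof. by elim: m => //= m IH; rewrite size_rcons size_map IH. Qed.

Lemma nth_vl m i : i < m -> nth (Var 0) (vl m) i = Var (m - i.+1).
Proof.
elim: m i => [|m IH] i // Hi /=.
rewrite nth_rcons size_map size_vl; case: ltnP => H.
- rewrite (nth_map (Var 0)) ?size_vl // IH //=; congr Var; lia.
- have -> : i = m by lia.
  rewrite eqxx; congr Var; lia.
Qed.

Lemma lamsSr n M : lams n.+1 M = lams n (Lam M).
Proof. exact: iterSr. Qed.

Lemma eta_vl m k : betaetas (lams m (apps (Var (m + k)) (vl m))) (Var k).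
Proof.
elim: m => [|m IH]; first exact: star_refl.
rewrite lamsSr /= apps_rcons.
have -> : apps (Var (m.+1 + k)) (map (rename S) (vl m)) = rename S (apps (Var (m + k)) (vl m)).
  by rewrite rename_apps.
apply: star_trans IH; apply: betaetas_lams; apply: star1; exact: be_eta.
Qed.

Inductive good : blt -> nat -> nat -> Prop :=
| goodN m k b Us : size Us = m -> m <= b ->
    (forall i, i < m -> good (nth Bot Us i) (m - i.+1) b.-1) ->
    good (Node m (m + k) Us) k b.

Lemma good_mono U k b : good U k b -> forall b', b <= b' -> good U k b'.
Proof.
elim=> m {}k {}b Us HS Hm Hch IH b' Hb.
apply: goodN => //; first exact: leq_trans Hb.
move=> i Hi; apply: IH => //; lia.
Qed.

Definition hfun (k : nat) := fun j => if j == k then 0 else j.+1.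

Lemma hfun0 k j : (hfun k j == 0) = (j == k).
Proof. by rewrite /hfun; case: (j == k). Qed.

Lemma comp_cond m i f : i < m ->
  forall j, (hfun (m - i.+1) (iter m upren f j) == 0) = (j == m - i.+1).
Proof.
move=> Hi j; rewrite hfun0 iter_upren; case: ltnP => // Hj.
apply/eqP/eqP; lia.
Qed.

Lemma head_fwd m f k : (forall j, (f j == 0) = (j == k)) -> iter m upren f (m + k) = m.
Proof.
move=> Hf; rewrite iter_upren ltnNge leq_addr /= addKn.
have H0 : f k = 0 by apply/eqP; rewrite Hf.
by rewrite H0 addn0.
Qed.

Lemma head_bwd m f k v : (forall j, (f j == 0) = (j == k)) -> iter m upren f v = m -> v = m + k.
Proof.
move=> Hf; rewrite iter_upren; case: ltnP => Hv.
- by move=> E; rewrite E ltnn in Hv.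
- move=> E; have E2 : f (v - m) = 0 by lia.
  have := Hf (v - m); rewrite E2 eqxx => /esym /eqP; lia.
Qed.

Lemma fm_ge l i : i < size l -> nth 0 l i <= foldr maxn 0 l.
Proof.
elim: l i => [|x l IH] [|i] //= Hi; first exact: leq_maxl.
exact: leq_trans (IH _ Hi) (leq_maxr _ _).
Qed.

Lemma fm_le l B : (forall i, i < size l -> nth 0 l i <= B) -> foldr maxn 0 l <= B.
Proof.
elim: l => [|x l IH] //= H; rewrite geq_max (H 0) //=.
by apply: IH => i Hi; exact: (H i.+1).
Qed.

Lemma fchoice (P : nat -> nat -> Prop) N : (forall i, i < N -> exists x, P i x) ->
  exists l, size l = N /\ forall i, i < N -> P i (nth 0 l i).
Proof.
elim: N => [|N IH] H; first by exists [::].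
have [l [Hl Hp]] : exists l, size l = N /\ forall i, i < N -> P i (nth 0 l i).
  by apply: IH => i Hi; apply: H; lia.
have [x Hx] := H N (ltnSn N).
exists (rcons l x); split; first by rewrite size_rcons Hl.
move=> i Hi; rewrite nth_rcons Hl; case: ltnP => H2; first exact: Hp.
have E : i = N by lia.
by rewrite E eqxx.
Qed.

Lemma betas_lam_inv M N : betas (Lam M) N -> exists N', N = Lam N' /\ betas M N'.
Proof.
move E : (Lam M) => X H; elim: H M E => [A|A B C HAB _ IH] M E.
- by exists M; split; [rewrite E | apply: star_refl].
- subst A; inversion HAB; subst.
  have [N' [-> H2]] := IH _ erefl.
  by exists N'; split=> //; apply: star_step H0 H2.
Qed.

Lemma good_inE U k b : good U k b -> forall R A, bt_sim R -> R A U -> betaetas A (Var k).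
Proof.
elim=> m {}k {}b Us HS Hm Hch IH R A HR HA.
case: (HR _ _ HA) => [[E _] //|[n [y [Ms [Us2 [Hb E HS2 HU]]]]]].
case: E => En Ey EUs; subst n y Us2.
apply: star_trans (betas_be Hb) _.
apply: star_trans (eta_vl m k).
apply: betaetas_lams; apply: betaetas_apps; first exact: star_refl.
- by rewrite size_vl -HS2.
- move=> i Hi; have Him : i < m by rewrite -HS HS2.
  rewrite nth_vl //; apply: (IH i Him R) => //; exact: HU.
Qed.

Lemma esize_good X s : esize X s -> forall f k A U, X = Lam (rename f A) ->
  (forall j, (f j == 0) = (j == k)) -> IsBT A U -> good U k s.
Proof.
elim=> {X s}.
- move=> Q HQ f k A U EQ Hf [R [HR HA]]; subst Q.
  have [N' [EN HN]] := betas_lam_inv HQ.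
  case: EN => EN; subst N'.
  have [A1 [HA1 EA1]] := betas_antiren HN.
  case: A1 EA1 HA1 => // v [Ev] HA1.
  have Evk : v = k by apply/eqP; rewrite -Hf -Ev.
  subst v.
  case: (HR _ _ HA) => [[_ Hn]|[n [y [Ms [Us [Hb -> HS HU]]]]]].
  + by case: Hn; exists 0, k, [::].
  + have [En Ey HS2 _] := hnf_join Hb (HA1 : betas A (lams 0 (apps (Var k) [::]))).
    subst n y; move: HS2 HS => /= /size0nil -> /size0nil ->.
    exact: (@goodN 0 k 0 [::]).
- move=> Q m Qs ss HQ HQs Hss Hch IH f k A U EQ Hf [R [HR HA]]; subst Q.
  have [N' [EN HN]] := betas_lam_inv HQ.
  case: EN => EN; subst N'.
  have [A1 [HA1 EA1]] := betas_antiren HN.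
  have [v [Qs0 [EA1' Hv EQs]]] := lams_antiren (esym EA1).
  subst A1; have Ev := head_bwd Hf Hv; subst v.
  case: (HR _ _ HA) => [[_ Hn]|[n [y [Ms [Us [Hb -> HS HU]]]]]].
  + by case: Hn; exists m, (m + k), Qs0.
  + have [En Ey HS2 HJ] := hnf_join HA1 Hb.
    subst n y.
    have HQs0 : size Qs0 = m by rewrite -HQs EQs size_map.
    apply: goodN; first by rewrite HS -HS2.
    * exact: leq_maxl.
    * move=> i Hi.
      have Hi0 : i < size Qs0 by rewrite HQs0.
      apply: (good_mono (b := nth 0 ss i)).
      - apply: (IH i Hi (fun j => hfun (m - i.+1) (iter m upren f j)) (m - i.+1)
                 (nth (Var 0) Qs0 i)).
        + by rewrite /bindvar EQs (nth_map (Var 0)) // rename_rename.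
        + exact: comp_cond.
        + apply: (isbt_join HR (HU i _)); first by rewrite -HS2.
          exact: HJ.
      - have H1 : nth 0 (map S ss) i <= foldr maxn 0 (map S ss)
          by apply: fm_ge; rewrite size_map Hss.
        rewrite (nth_map 0) ?Hss // in H1.
        have H2 := leq_maxr m (foldr maxn 0 [seq i.+1 | i <- ss]).
        lia.
Qed.

Lemma lift_good c R : lift_sim c R -> forall U k b, good U k b ->
  forall d V, R d U V -> good V (if k < d then k else k + c) b.
Proof.
move=> HL U k b; elim=> m {}k {}b Us HS Hm Hch IH d V HRV.
case: (HL _ _ _ HRV) => [[E _] //|[n [y [Us2 [Vs [E EV HSV HVs]]]]]].
case: E => En Ey EUs; subst n y Us2 V.
have -> : (if m + k < d + m then m + k else m + k + c) = m + (if k < d then k else k + c).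
  by rewrite (addnC d m) ltn_add2l; case: (k < d) => //; rewrite addnA.
apply: goodN => //; first by rewrite HSV.
move=> i Hi.
have := IH i Hi (d + m) (nth Bot Vs i) (HVs i _).
rewrite HS => /(_ Hi).
have Ee1 : m - i.+1 < d + m by lia.
rewrite Ee1.
by [].
Qed.

Lemma le_good p' R : le_sim p' R -> forall U k b, good U k b ->
  forall W, R U W -> good W k (b + p').
Proof.
move=> HR U k b; elim=> m {}k {}b Us HS Hm Hch IH W HRW.
case: (HR _ _ HRW) => [[E _] //|[n [y [kk [m' [Us2 [Vs [Qs [Hm' [EU EW] [HS1 HS2 HS3] HQ HV]]]]]]]]].
case: EU => En Ey EUs; subst n y Us2 W.
have Ekk : kk = m by rewrite -HS1 HS.
rewrite Ekk in HS2 HV.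
have Ee2 : m + k + m' = (m + m') + k by lia.
rewrite Ee2.
apply: goodN; first by rewrite size_cat HS2 HS3.
- lia.
- move=> i Hi; rewrite nth_cat HS2; case: ltnP => Him.
  + have [W' [[R' [HR' HL]] HW']] := HV i Him.
    have G := IH i Him W' HW'.
    have := lift_good HR' G HL; rewrite ltn0 /= => G2.
    have Ee3 : m + m' - i.+1 = m - i.+1 + m' by lia.
    rewrite Ee3.
    apply: (good_mono G2); lia.
  + have Hj : i - m < m' by lia.
    have [Q' [HQ' [_ [s [Hs Hsp]]]]] := HQ _ Hj.
    have G := esize_good Hs erefl (hfun0 _) HQ'.
    have Ee4 : m + m' - i.+1 = m' - (i - m).+1 by lia.
    rewrite Ee4.
    apply: (good_mono G); lia.
Qed.

Lemma good_esize U k b : good U k b -> forall R A f, bt_sim R -> R A U ->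
  (forall j, (f j == 0) = (j == k)) ->
  exists s, s <= b /\ esize (Lam (rename f A)) s.
Proof.
elim=> m {}k {}b Us HS Hm Hch IH R A f HR HA Hf.
case: (HR _ _ HA) => [[E _] //|[n [y [Ms [Us2 [Hb E HS2 HU]]]]]].
case: E => En Ey EUs; subst n y Us2.
have HMs : size Ms = m by rewrite -HS2.
set g := iter m upren f.
pose P := fun i x => x <= b.-1 /\
       esize (bindvar (m - i.+1) (nth (Var 0) (map (rename g) Ms) i)) x.
have [ss [Hss Hp]] : exists ss, size ss = m /\ forall i, i < m -> P i (nth 0 ss i).
  apply: (@fchoice P) => i Hi.
  have Hi2 : i < size Ms by rewrite HMs.
  have [s [Hs1 Hs2]] := IH i Hi R (nth (Var 0) Ms i)
     (fun j => hfun (m - i.+1) (g j)) HR (HU i Hi2) (comp_cond f Hi).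
  exists s; split=> //.
  by rewrite /bindvar (nth_map (Var 0)) // rename_rename.
exists (maxn m (foldr maxn 0 (map S ss))); split.
- rewrite geq_max Hm /=; apply: fm_le => i; rewrite size_map Hss => Hi.
  rewrite (nth_map 0) ?Hss //; have [H1 _] := Hp i Hi; lia.
- apply: (esize_hnf (Qs := map (rename g) Ms)) => //.
  + rewrite lamsS; apply: betas_lam.
    have := betas_rename f Hb; rewrite rename_lams rename_apps /=.
    by rewrite (head_fwd m Hf).
  + by rewrite size_map.
  + by move=> i Hi; have [_ H] := Hp i Hi.
Qed.

Theorem mainTheorem16 (p p' : nat) (Q Q' : term) :
  inEp p (Lam Q) ->
  (exists U U' : blt, [/\ IsBT Q U, IsBT Q' U' & le_eta p' U U']) ->
  inEp (p + p') (Lam Q').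
Proof.
move=> [HE [s [Hs Hsp]]] [U [U' [HU HU' [R [HR HRU]]]]].
have Hid : forall j, (id j == 0) = (j == 0) by [].
have G1 : good U 0 s.
  apply: (esize_good Hs (f := id) (A := Q)) => //.
  by rewrite rename_id.
have G2 := le_good HR G1 HRU.
have [R' [HR' HA']] := HU'.
have [s' [Hle Hes]] := good_esize G2 HR' HA' Hid.
split.
- exact: betaetas_lam (good_inE G2 HR' HA').
- exists s'; split; last by lia.
  by rewrite rename_id in Hes.
Qed.
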